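(* For every nonempty word $p\in\mathbb{P}^\ast$ with no immediate repetitions, $s(p)+s(p^{+1})=1$.
   Context: $\mathbb{P}$ denotes the positive integers and $\mathbb{P}^\ast$ the set of finite words over $\mathbb{P}$; $|p|$ is the length of $p$ and $p(i)$ its $i$th letter. The word $p^{+1}$ is defined by $p^{+1}(i)=p(i)+1$. A word $p$ has an immediate repetition if $p(i)=p(i+1)$ for some $i$. The infinite zigzag word is the concatenation $R_1R_2R_3\cdots$ of runs, where each odd-indexed run is the ascending sequence of all odd positive integers and each even-indexed run is the descending sequence of all even positive integers. A word $p$ occurs as a subsequence of the first $m$ runs if $p=q_1q_2\cdots q_m$ for (possibly empty) words $q_k$, where for odd $k$, $q_k$ is strictly increasing with odd letters, and for even $k$, $q_k$ is strictly decreasing with even letters. The score $s(p)$ is the least $m\ge 0$ such that $p$ occurs as a subsequence of the first $m$ runs, minus $|p|$. *)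

(* Defs.v *)
From mathcomp Require Import all_boot all_order all_algebra.
Set Implicit Arguments. Unset Strict Implicit. Unset Printing Implicit Defensive.

(* Words over the positive integers are represented by seq nat
   (positivity is imposed as a hypothesis where needed). *)

Definition shift1 (p : seq nat) : seq nat := map S p.

Definition has_imm_rep (p : seq nat) : Prop :=
  exists i, i.+1 < size p /\ nth 0 p i = nth 0 p i.+1.

(* q is a valid block for run number k (runs numbered from 1):
   odd k  : q strictly increasing with odd letters;
   even k : q strictly decreasing with even letters. *)
Definition run_ok (k : nat) (q : seq nat) : bool :=
  if odd k then all odd q && sorted ltn q
  else all (fun x => ~~ odd x) q && sorted (fun x y => y < x) q.

(* occb k m p : p = q_k q_{k+1} ... q_{k+m-1} with each q_j valid for run j. *)
Fixpoint occb (k m : nat) (p : seq nat) : bool :=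
  match m with
  | 0 => p == [::]
  | m'.+1 => has (fun j => run_ok k (take j p) && occb k.+1 m' (drop j p))
                 (iota 0 (size p).+1)
  end.

(* p occurs as a subsequence of the first m runs R_1 ... R_m. *)
Definition occurs_in_first (m : nat) (p : seq nat) : bool := occb 1 m p.

Lemma occbS (k m : nat) (p : seq nat) :
  occb k m.+1 p =
  has (fun j => run_ok k (take j p) && occb k.+1 m (drop j p)) (iota 0 (size p).+1).
Proof. by []. Qed.

Lemma run_ok_nil (k : nat) : run_ok k [::].
Proof. by rewrite /run_ok; case: ifP. Qed.

Lemma occb_exists (p : seq nat) (k : nat) : occb k (2 * size p) p.
Proof.
elim: p k => [|x p IH] k; first by [].
have -> : 2 * size (x :: p) = (2 * size p).+2 by rewrite /= mulnS.
rewrite occbS; apply/hasP; case: (boolP (run_ok k [:: x])) => Hx.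
- exists 1; first by rewrite mem_iota.
  rewrite take_cons take0 drop_cons drop0 Hx occbS.
  apply/hasP; exists 0; first by rewrite mem_iota.
  by rewrite take0 drop0 run_ok_nil IH.
- exists 0; first by rewrite mem_iota.
  rewrite take0 drop0 run_ok_nil occbS.
  apply/hasP; exists 1; first by rewrite mem_iota.
  rewrite take_cons take0 drop_cons drop0 IH andbT.
  move: Hx; rewrite /run_ok /= !andbT; case: (odd k) => //=.
  by move/negbNE.
Qed.

Lemma occurs_exists (p : seq nat) : exists m, occurs_in_first m p.
Proof. by exists (2 * size p); apply: occb_exists. Qed.

Definition min_runs (p : seq nat) : nat := ex_minn (occurs_exists p).

Definition score (p : seq nat) : int := (min_runs p)%:Z - (size p)%:Z.

(* Main.v *)
Require Import Defs.
From mathcomp Require Import all_boot all_order all_algebra.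
From mathcomp Require Import zify.
Import GRing.Theory.

Definition rok (b : bool) (q : seq nat) : bool :=
  if b then all odd q && sorted ltn q
  else all (fun x => ~~ odd x) q && sorted (fun x y => y < x) q.

Lemma run_okE k q : run_ok k q = rok (odd k) q.
Proof. by []. Qed.

Fixpoint G (b : bool) (a : nat) (s : seq nat) : nat :=
  match s with
  | [::] => 0
  | x :: s' => if rok b [:: a; x] then G b x s'
               else if rok (~~ b) [:: x] then (G (~~ b) x s').+1
               else (G b x s').+2
  end.

Definition N (b : bool) (s : seq nat) : nat :=
  match s with
  | [::] => 0
  | x :: s' => if rok b [:: x] then (G b x s').+1 else (G (~~ b) x s').+2
  end.

Lemma rok_cons2 b a x q : rok b (a :: x :: q) = rok b [:: a; x] && rok b (x :: q).
Proof.
rewrite /rok; case: b => /=; rewrite !andbT;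
  by case: (odd a); case: (odd x); case: (all _ q); case: (_ < _); case: (path _ _ _).
Qed.

Lemma rok_head b x q : rok b (x :: q) -> rok b [:: x].
Proof. by rewrite /rok; case: b => /= /andP[/andP[-> _] _]. Qed.

Lemma rok2_r b a x : rok b [:: a; x] -> rok b [:: x].
Proof. by rewrite rok_cons2 => /andP[]. Qed.

Lemma rok1N b x : rok (~~ b) [:: x] = ~~ rok b [:: x].
Proof. by rewrite /rok; case: b => /=; rewrite ?andbT ?negbK. Qed.

Lemma occb_nil k m : occb k m [::].
Proof.
elim: m k => [|m IH] k //=. by rewrite run_ok_nil IH. Qed.

Lemma occbP k m p :
  occb k m.+1 p <-> exists q r, p = q ++ r /\ run_ok k q /\ occb k.+1 m r.
Proof.
rewrite occbS; split.
- case/hasP => j _ /andP[H1 H2]; exists (take j p), (drop j p).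
  by rewrite cat_take_drop.
- case=> q [r [-> [H1 H2]]]; apply/hasP; exists (size q).
  + by rewrite mem_iota size_cat /=; lia.
  + by rewrite take_size_cat // drop_size_cat // H1 H2.
Qed.

Definition Pst k a m s := exists q r, s = q ++ r /\ run_ok k (a :: q) /\ occb k.+1 m r.

Lemma Pst_cons k a m x s : run_ok k [:: a] ->
  (Pst k a m (x :: s) <-> occb k.+1 m (x :: s) \/ (run_ok k [:: a; x] /\ Pst k x m s)).
Proof.
move=> Ha; split.
- case=> [[|y q]] [r [E [Hq Hr]]].
  + by left; rewrite E.
  + case: E => ? E; subst; right; move: Hq; rewrite !run_okE rok_cons2 => /andP[H1 H2].
    by split => //; exists q, r.
- case.
  + by move=> H; exists [::], (x :: s).
  + case=> Hax [q [r [E [Hq Hr]]]]; exists (x :: q), r; rewrite E.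
    by split => //; split => //; rewrite run_okE rok_cons2 -!run_okE Hax.
Qed.

Lemma occb_cons k m x s :
  occb k m.+1 (x :: s) <-> occb k.+1 m (x :: s) \/ (run_ok k [:: x] /\ Pst k x m s).
Proof.
rewrite occbP; split.
- case=> [[|y q]] [r [E [Hq Hr]]].
  + by left; rewrite E.
  + case: E => ? E; subst; right; split; first exact: rok_head Hq.
    by exists q, r.
- case.
  + by move=> H; exists [::], (x :: s); rewrite run_ok_nil.
  + case=> Hx [q [r [E [Hq Hr]]]]; exists (x :: q), r; rewrite E.
    by [].
Qed.

Lemma helper s :
  (forall k a m, run_ok k [:: a] -> (Pst k a m s <-> G (odd k) a s <= m)) ->
  forall k m x, (occb k m (x :: s) <-> N (odd k) (x :: s) <= m).
Proof.
move=> H k m x; elim: m k => [|m IH] k; first by rewrite /=; case: (rok _ _).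
rewrite occb_cons IH /= rok1N.
case E: (rok (odd k) [:: x]) => /=.
- rewrite (H k x m) //= negbK run_okE E; lia.
- rewrite run_okE E; split; [case=> //; case | move=> ?; left]; lia.
Qed.

Lemma main_eq s : forall k a m, run_ok k [:: a] -> (Pst k a m s <-> G (odd k) a s <= m).
Proof.
elim: s => [|x s IH] k a m Ha.
- by split => // _; exists [::], [::]; rewrite occb_nil.
- rewrite Pst_cons // (helper _ IH) /= rok1N negbK.
  rewrite run_okE; case E: (rok (odd k) [:: a; x]) => /=.
  + have Hx : rok (odd k) [:: x] by exact: rok2_r E.
    rewrite Hx (IH k x m Hx) /=; lia.
  + by split; [case=> // -[] | move=> ?; left].
Qed.

Lemma occbN k m p : occb k m p <-> N (odd k) p <= m.
Proof.
case: p => [|x s]; first by rewrite occb_nil.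
exact: (helper s (main_eq s) k m x).
Qed.

Lemma min_runsE p : min_runs p = N true p.
Proof.
rewrite /min_runs; case: ex_minnP => m Hm Hmin.
have /occbN /= H1 := Hm.
have H2 : occb 1 (N true p) p by apply/occbN.
have := Hmin _ H2; lia.
Qed.

Lemma rok2E b a x : rok b [:: a; x] = [&& odd a == b, odd x == b & (if b then a < x else x < a)].
Proof. by rewrite /rok; case: b => /=; case: (odd a); case: (odd x); rewrite ?andbT. Qed.

Lemma rok1E b x : rok b [:: x] = (odd x == b).
Proof. by rewrite /rok; case: b => /=; case: (odd x). Qed.

Lemma sumG s : forall b a, path (fun u v => u != v) a s -> odd a = b ->
  G b a s + G (~~ b) a.+1 (map S s) = 2 * size s.
Proof.
elim: s => [|x s IH] b a //= /andP[Hne Hp] Ha.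
have IH1 := IH (odd x) x Hp erefl.
rewrite !rok2E !rok1E /= Ha -Ha.
have Hlt : (a < x) || (x < a) by rewrite -neq_ltn.
case Oa: (odd a) IH1; case Ox: (odd x) => /= IH1; rewrite ?ltnS;
  case/orP: Hlt => Hl; rewrite ?Hl /=; rewrite ?(ltnNge x a) ?(ltnNge a x) ?(ltnW Hl) /=.
all: lia.
Qed.

Lemma norep_path x s : ~ has_imm_rep (x :: s) -> path (fun u v => u != v) x s.
Proof.
move=> H; apply/(pathP 0) => i Hi; apply/eqP => E; apply: H.
by exists i; split => //=.
Qed.

Theorem mainTheorem2 (p : seq nat) :
  p <> [::] -> all (fun x => 0 < x) p -> ~ has_imm_rep p ->
  (score p + score (shift1 p) = 1)%R.
Proof.
case: p => [//|x s] _ _ Hr.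
have Hp := norep_path x s Hr.
rewrite /score !min_runsE /shift1 /= size_map !andbT.
have H1 := sumG s (odd x) x Hp (erefl (odd x)).
case Ox: (odd x) H1 => /= H1; lia.
Qed.
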